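(* For every $n\in\mathbb N$ there exists an $n$-saturated closed graph on the Cantor space $2^\omega$; that is, there is a graph $G$ with vertex set $V(G)=2^\omega$ whose edge relation $E(G)$ is a closed subset of $2^\omega\times 2^\omega$ and which is $n$-saturated.
   Context: A graph is a pair $G=(V(G),E(G))$ where $V(G)$ is a non-empty set and $E(G)\subseteq V(G)\times V(G)$ is a symmetric and reflexive relation (every vertex has a loop). A graph on a topological space $X$ is closed if its edge relation is a closed subset of $X^2$. For $A\subseteq V(G)$, a type over $A$ is a function $f\colon A\to\{0,1\}$; a vertex $v\in V(G)\setminus A$ realizes $f$ if for every $a\in A$, $(a,v)\in E(G)$ if and only if $f(a)=1$. The graph $G$ is $n$-saturated if for every $A\subseteq V(G)$ with $|A|<n$ and every type $f\in\{0,1\}^A$ there is a vertex $x\in V(G)\setminus A$ realizing $f$. The Cantor space $2^\omega=\{0,1\}^{\mathbb N}$ carries the product topology. *)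

(* Defs.v *)
From HB Require Import structures.
From mathcomp Require Import all_boot all_order all_algebra.
From mathcomp Require Import all_classical all_reals all_analysis.
Set Implicit Arguments. Unset Strict Implicit. Unset Printing Implicit Defensive.
Local Open Scope classical_set_scope.

Definition is_graph (T : Type) (E : set (T * T)) : Prop :=
  (forall x y, E (x, y) -> E (y, x)) /\ (forall x, E (x, x)).

Definition card_lt (T : Type) (A : set T) (n : nat) : Prop :=
  exists2 k : nat, (k < n)%N & (A #= `I_k)%card.

(* v realizes the type f over A (only the values of f on A matter). *)
Definition realizes (T : Type) (E : set (T * T)) (A : set T) (f : T -> bool) (v : T) : Prop :=
  ~ A v /\ (forall a, A a -> (E (a, v) <-> f a = true)).

Definition n_saturated (T : Type) (E : set (T * T)) (n : nat) : Prop :=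
  forall (A : set T) (f : T -> bool), card_lt A n -> exists v, realizes E A f v.

(* Main.v *)
Require Import Defs.
From mathcomp Require Import all_boot all_order all_algebra.
From mathcomp Require Import all_classical all_reals all_analysis.
Local Open Scope classical_set_scope.

Definition CC := (cantor_space * cantor_space)%type.

Lemma coord1_cont (i : nat) : continuous (fun p : CC => p.1 i).
Proof.
move=> p; apply: (@continuous_comp _ _ _ fst (fun x : cantor_space => x i)).
  exact: cvg_fst.
exact: (@proj_continuous nat (fun _ => bool) i).
Qed.

Lemma coord2_cont (i : nat) : continuous (fun p : CC => p.2 i).
Proof.
move=> p; apply: (@continuous_comp _ _ _ snd (fun x : cantor_space => x i)).
  exact: cvg_snd.
exact: (@proj_continuous nat (fun _ => bool) i).
Qed.

Lemma closed_eqc (g h : CC -> cantor_space) :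
  (forall m, continuous (fun p => g p m)) ->
  (forall m, continuous (fun p => h p m)) ->
  closed [set p | g p = h p].
Proof.
move=> gc hc.
have -> : [set p | g p = h p] = \bigcap_(m in setT)
   (((fun p => g p m) @^-1` [set true] `&` (fun p => h p m) @^-1` [set true]) `|`
    ((fun p => g p m) @^-1` [set false] `&` (fun p => h p m) @^-1` [set false])).
  apply/seteqP; split => p /=.
    move=> E m _ /=; have -> : g p m = h p m by rewrite E.
    by case: (h p m); [left|right].
  move=> H; apply: functional_extensionality_dep => m.
  by case: (H m I) => -[/= -> ->].
apply: closed_bigI => m _.
by apply: closedU; apply: closedI; apply: preimage_closed;
  (try exact: (@discrete_closed bool)); move=> x _; [apply: gc|apply: hc|apply: gc|apply: hc].
Qed.
Section S.
Variable n : nat.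
Local Notation N := n.+1.
Definition pi (j : nat) (x : cantor_space) : cantor_space := fun k => x (k * N + j)%N.
Definition build (g : nat -> cantor_space) (s : nat -> bool) : cantor_space :=
  fun m => if (m %% N < n)%N then g (m %% N)%N (m %/ N)%N else s (m %/ N)%N.

Lemma pi_build g s j : (j < n)%N -> pi j (build g s) = g j.
Proof.
move=> jn; apply: functional_extensionality_dep => k.
rewrite /pi /build.
have jN : (j < N)%N by apply: ltnW.
rewrite modnMDl modn_small // jn divnMDl // divn_small // addn0.
by [].
Qed.

Lemma build_n g s i : build g s (i * N + n)%N = s i.
Proof.
rewrite /build modnMDl modn_small // ltnn divnMDl // divn_small // addn0.
by [].
Qed.

Definition Erel : set (cantor_space * cantor_space) :=
  [set p | p.1 = p.2 \/ (exists2 j, (j < n)%N & p.1 = pi j p.2)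
                     \/ (exists2 j, (j < n)%N & p.2 = pi j p.1)].

Lemma Erel_sat : n_saturated Erel n.
Proof.
move=> A f [k kn /card_esym /card_set_bijP [e [efun _ esurj]]].
pose d : cantor_space := fun t => ~~ e t t.
have dA : ~ A d.
  move=> /esurj [t tk et].
  have : d t = e t t by rewrite et.
  by rewrite /d; case: (e t t).
pose g j := if (j < k)%N && f (e j) then e j else d.
pose ex t j := if (j < n)%N then pi j (e t) else e t.
pose s i := ~~ (ex (i %/ N) (i %% N) ((i * N + n)%N)).
pose v := build g s.
have vex t j : (j < N)%N -> v <> ex t j.
  move=> jN vE.
  have := build_n g s (t * N + j).
  rewrite -/v vE /s divnMDl // divn_small // addn0 modnMDl modn_small //.
  by case: (ex t j _).
exists v; split.
  move=> /esurj [t tk et].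
  have H : v = ex t n by rewrite /ex ltnn et.
  exact: (vex t n (ltnSn n) H).
move=> a /esurj [t tk <-]; split.
  case=> [/= eq|[[j jn /= eq]|[j jn /= eq]]].
  - have H : v = ex t n by rewrite /ex ltnn eq.
    by exfalso; exact: (vex t n (ltnSn n) H).
  - move: eq; rewrite /v pi_build // /g.
    case: ifP => [/andP [_ fj] ej|_ ed].
      by move: (ej) fj => <-.
    by exfalso; apply: dA; rewrite -ed; apply: efun.
  - have H : v = ex t j by rewrite /ex jn eq.
    by exfalso; exact: (vex t j (ltnW jn) H).
move=> ft; right; left; exists t; first by apply: ltn_trans kn.
by rewrite /= /v pi_build ?(ltn_trans tk kn) // /g tk ft.
Qed.
End S.

Theorem theorem1 (n : nat) :
  exists E : set (cantor_space * cantor_space),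
    is_graph E /\ closed E /\ n_saturated E n.
Proof.
exists (Erel n); split; last split; last exact: Erel_sat.
  split; last by move=> x; left.
  by move=> x y [/= ->|[[j jn /= ->]|[j jn /= ->]]]; [left|right;right;exists j|right;left;exists j].
have -> : Erel n = [set p : CC | p.1 = p.2] `|`
   ((\bigcup_(j in `I_n) [set p : CC | p.1 = pi n j p.2]) `|`
    (\bigcup_(j in `I_n) [set p : CC | p.2 = pi n j p.1])).
  apply/seteqP; split => p [H|[[j jn H]|[j jn H]]];
    by [left|right;left;exists j|right;right;exists j].
have c1 m : continuous (fun p : CC => p.1 m) by exact: coord1_cont.
have c2 m : continuous (fun p : CC => p.2 m) by exact: coord2_cont.
apply: closedU; first exact: closed_eqc.
apply: closedU; apply: closed_bigcup; (try exact: finite_II) => j _;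
  apply: closed_eqc => // m; rewrite /pi /=; [exact: c2|exact: c1].
Qed.
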